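(* In the protocol IT-HS described in the context, with $f<\frac{n}{3}$ Byzantine parties, let $lock>0$ be some nonfaulty party's $lock$ variable and $lock\_val$ its value. If some nonfaulty party has either $prev\_key2\ge lock$, or $key2\ge lock$ and $key2\_val\neq lock\_val$, then there exist $f+1$ nonfaulty parties whose $key1$, $key1\_val$ and $prev\_key1$ fields support opening the pair $(lock,lock\_val)$.
   Context: Model. $n$ parties with inputs $x_i$; up to $f$ Byzantine (arbitrary behaviour), the rest nonfaulty; authenticated point-to-point channels; partial synchrony: after an unknown time GST every message arrives within known $\Delta$ time and clocks are synchronized, before GST delays are arbitrary but finite. Support: fields $(key1,key1\_val,prev\_key1)=(k,w,pk)$ (as carried in a $proof$ message) support opening a pair $(L,V)$ if $L\le pk$, or $L\le k$ and $w\neq V$. Protocol IT-HS (party $i$). Variables: $lock\gets 0$, $lock\_val\gets x_i$; $key3\gets 0$, $key3\_val\gets x_i$; $key2\gets 0$, $key2\_val\gets x_i$, $prev\_key2\gets -1$; $key1\gets 0$, $key1\_val\gets x_i$, $prev\_key1\gets -1$; $view\gets 0$; $highest\_request[j]\gets 0$, $highest\_abort[j]\gets 0$ for $j\in[n]$. ''Send-upon-join $m$'': for each $j$, send $m$ to $j$ as soon as $highest\_request[j]$ equals the current view. Background: (B1) on $\langle request,v\rangle$ from $j$, $highest\_request[j]\gets\max(highest\_request[j],v)$. (B2) on $\langle done,val\rangle$ from $f+1$ parties with the same $val$: if no $done$ sent yet, send $\langle done,val\rangle$ to all. (B3) on $\langle done,val\rangle$ from $n-f$ parties with the same $val$: decide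 $val$, terminate. (B4) on $\langle abort,v\rangle$ from $j$ with $highest\_abort[j]<v$: $highest\_abort[j]\gets v$; $u\gets$ the $(f+1)$-th largest entry of $highest\_abort$; if $u>highest\_abort[i]$ send $\langle abort,u\rangle$ to all and set $highest\_abort[i]\gets u$; $w\gets$ the $(n-f)$-th largest entry; if $w\ge view$ set $view\gets w+1$. Views: for each value $v$ of $view$, while $view=v$: fresh per-view state; after $11\Delta$ local time send $\langle abort,v\rangle$ to all; ignore other views' messages except $abort$, $done$, $request$; primary $p=(v\bmod n)+1$. View change: send $\langle request,v\rangle$ to all; when $highest\_request[p]=v$ send $\langle suggest,key3,key3\_val,key2,key2\_val,prev\_key2,v\rangle$ to $p$; send-upon-join $\langle proof,key1,key1\_val,prev\_key1,v\rangle$. If $i=p$: upon first $\langle suggest,k3,v3,k2,v2,pk2,v\rangle$ from a party, if $pk2<k2<v$ add $(k2,v2,pk2)$ to $key2\_proofs$; if $k3=0$ add $(k3,v3)$ to $suggestions$; else if $k3<v$ add $(k3,v3)$ as soon as at least $f+1$ triples $(k,w,pk)\in key2\_proofs$ satisfy $k3\le pk$ or ($k3\le k$ and $w=v3$); once $|suggestions|\ge n-f$, send-upon-join $\langle propose,k,w,v\rangle$ for $(k,w)\in suggestions$ with maximal $k$. Message processing: upon first $\langle proof,k1,v1,pk1,v\rangle$ from a party, if $v>k1>pk1$ add $(k1,v1,pk1)$ to $proofs$. Upon first $\langle propose,key,val,v\rangle$ from $p$: if $lock=0$ or $val=lock\_val$, send-upon-join $\langle echo,val,v\rangle$; else if $v>key\ge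 lock$, then once at least $f+1$ triples $(k,w,pk)\in proofs$ satisfy $lock\le pk$ or ($lock\le k$ and $w\ne lock\_val$), send-upon-join $\langle echo,val,v\rangle$. Upon $\langle echo,val,v\rangle$ from $n-f$ parties with the same $val$: send-upon-join $\langle key1,val,v\rangle$; if $key1\_val\ne val$ then $prev\_key1\gets key1$, $key1\_val\gets val$; $key1\gets v$. Upon $\langle key1,val,v\rangle$ from $n-f$ parties (same $val$): send-upon-join $\langle key2,val,v\rangle$; if $key2\_val\ne val$ then $prev\_key2\gets key2$, $key2\_val\gets val$; $key2\gets v$. Upon $\langle key2,val,v\rangle$ from $n-f$ (same $val$): send-upon-join $\langle key3,val,v\rangle$; $key3\gets v$, $key3\_val\gets val$. Upon $\langle key3,val,v\rangle$ from $n-f$ (same $val$): send-upon-join $\langle lock,val,v\rangle$; $lock\gets v$, $lock\_val\gets val$. Upon $\langle lock,val,v\rangle$ from $n-f$ (same $val$): if no $done$ sent yet, send $\langle done,val\rangle$ to all. *)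

(* Defs.v *)
From HB Require Import structures.
From mathcomp Require Import all_boot all_order all_algebra.
Set Implicit Arguments. Unset Strict Implicit. Unset Printing Implicit Defensive.
Import Order.TTheory GRing.Theory Num.Theory.
Local Open Scope ring_scope.

Definition supports {V : eqType} (k : int) (w : V) (pk : int) (L : int) (Vv : V) : bool :=
  (L <= pk) || ((L <= k) && (w != Vv)).

Inductive stage := SEcho | SKey1 | SKey2 | SKey3 | SLock.

Definition stage_eqb (a b : stage) : bool :=
  match a, b with
  | SEcho, SEcho | SKey1, SKey1 | SKey2, SKey2 | SKey3, SKey3 | SLock, SLock => true
  | _, _ => false
  end.

Section ITHS.
Variables (n f : nat) (V : eqType) (x : 'I_n -> V) (F : {set 'I_n}).

(* Messages.  [MVote s val v] is <echo,val,v>, <key1,val,v>, ..., <lock,val,v>. *)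
Inductive msg :=
| MRequest (v : int)
| MDone (val : V)
| MAbort (v : int)
| MSuggest (k3 : int) (v3 : V) (k2 : int) (v2 : V) (pk2 : int) (v : int)
| MProof (k1 : int) (v1 : V) (pk1 : int) (v : int)
| MPropose (key : int) (val : V) (v : int)
| MVote (s : stage) (val : V) (v : int).

Definition out := ('I_n * msg)%type.

Fixpoint out_in (b : 'I_n) (m : msg) (o : seq out) : Prop :=
  match o with
  | [::] => False
  | p :: o' => p = (b, m) \/ out_in b m o'
  end.

Record keys := Keys {
  lock : int; lock_val : V;
  key3 : int; key3_val : V;
  key2 : int; key2_val : V; prev_key2 : int;
  key1 : int; key1_val : V; prev_key1 : int }.

(* per-view state (reset on each view change) *)
Record pview := PView {
  sugg : 'I_n -> option (int * V * int * V * int);  (* first suggest from each party *)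
  prf : 'I_n -> option (int * V * int);             (* first proof from each party *)
  prop : option (int * V * int * V);  (* first propose from the primary: key, val,
                                         and snapshot of (lock, lock_val) at receipt *)
  echoed : bool;
  proposed : bool;
  sugg_sent : bool;
  recv : stage -> 'I_n -> V -> bool;  (* received <stage,val,view> from party *)
  fired : stage -> V -> bool;         (* "upon n-f ..." already executed for val *)
  join : seq msg }.                   (* send-upon-join messages of this view *)

Record lstate := LState {
  ks : keys; pv : pview; view : int;
  hreq : 'I_n -> int; habort : 'I_n -> int;
  done_sent : bool; decided : option V;
  rdone : 'I_n -> V -> bool }.

Definition updf {A : Type} (h : 'I_n -> A) (j : 'I_n) (a : A) : 'I_n -> A :=
  fun k => if k == j then a else h k.

(* primary of view v is party (v mod n)+1, i.e. index v mod n of 'I_n *)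
Definition is_primary (v : int) (j : 'I_n) : bool := (j : nat) == (absz v %% n)%N.

Definition bcast (m : msg) : seq out := [seq (j, m) | j <- enum 'I_n].

(* k-th largest entry, counting from 0 *)
Definition kth_largest (k : nat) (h : 'I_n -> int) : int :=
  nth 0 (sort (fun a b : int => b <= a) [seq h j | j <- enum 'I_n]) k.

Definition set_pv (s : lstate) (p : pview) : lstate :=
  LState (ks s) p (view s) (hreq s) (habort s) (done_sent s) (decided s) (rdone s).
Definition set_ks (s : lstate) (k : keys) : lstate :=
  LState k (pv s) (view s) (hreq s) (habort s) (done_sent s) (decided s) (rdone s).
Definition set_hreq (s : lstate) h : lstate :=
  LState (ks s) (pv s) (view s) h (habort s) (done_sent s) (decided s) (rdone s).
Definition set_habort (s : lstate) h : lstate :=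
  LState (ks s) (pv s) (view s) (hreq s) h (done_sent s) (decided s) (rdone s).
Definition set_done_sent (s : lstate) b : lstate :=
  LState (ks s) (pv s) (view s) (hreq s) (habort s) b (decided s) (rdone s).
Definition set_decided (s : lstate) d : lstate :=
  LState (ks s) (pv s) (view s) (hreq s) (habort s) (done_sent s) d (rdone s).
Definition set_rdone (s : lstate) r : lstate :=
  LState (ks s) (pv s) (view s) (hreq s) (habort s) (done_sent s) (decided s) r.

Definition pv_sugg (p : pview) g : pview :=
  PView g (prf p) (prop p) (echoed p) (proposed p) (sugg_sent p) (recv p) (fired p) (join p).
Definition pv_prf (p : pview) g : pview :=
  PView (sugg p) g (prop p) (echoed p) (proposed p) (sugg_sent p) (recv p) (fired p) (join p).
Definition pv_prop (p : pview) g : pview :=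
  PView (sugg p) (prf p) g (echoed p) (proposed p) (sugg_sent p) (recv p) (fired p) (join p).
Definition pv_echoed (p : pview) g : pview :=
  PView (sugg p) (prf p) (prop p) g (proposed p) (sugg_sent p) (recv p) (fired p) (join p).
Definition pv_proposed (p : pview) g : pview :=
  PView (sugg p) (prf p) (prop p) (echoed p) g (sugg_sent p) (recv p) (fired p) (join p).
Definition pv_sugg_sent (p : pview) g : pview :=
  PView (sugg p) (prf p) (prop p) (echoed p) (proposed p) g (recv p) (fired p) (join p).
Definition pv_recv (p : pview) g : pview :=
  PView (sugg p) (prf p) (prop p) (echoed p) (proposed p) (sugg_sent p) g (fired p) (join p).
Definition pv_fired (p : pview) g : pview :=
  PView (sugg p) (prf p) (prop p) (echoed p) (proposed p) (sugg_sent p) (recv p) g (join p).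
Definition pv_addjoin (p : pview) (m : msg) : pview :=
  PView (sugg p) (prf p) (prop p) (echoed p) (proposed p) (sugg_sent p) (recv p) (fired p)
    (rcons (join p) m).

Definition fresh_pv (j : seq msg) : pview :=
  PView (fun _ => None) (fun _ => None) None false false false
        (fun _ _ _ => false) (fun _ _ => false) j.

Definition enter_view (s : lstate) (w : int) : lstate * seq out :=
  let k := ks s in
  (LState k (fresh_pv [:: MProof (key1 k) (key1_val k) (prev_key1 k) w]) w
          (hreq s) (habort s) (done_sent s) (decided s) (rdone s),
   bcast (MRequest w)).

Definition flush (s : lstate) : lstate * seq out :=
  let v := view s in
  let jm := flatten [seq (if hreq s j == v then [seq (j, m) | m <- join (pv s)] else [::])
                    | j <- enum 'I_n] in
  let ps := [seq j <- enum 'I_n | is_primary v j && (hreq s j == v)] in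
  let k := ks s in
  if ~~ sugg_sent (pv s) && (ps != [::]) then
    (set_pv s (pv_sugg_sent (pv s) true),
     jm ++ [seq (j, MSuggest (key3 k) (key3_val k) (key2 k) (key2_val k) (prev_key2 k) v)
           | j <- ps])
  else (s, jm).

Definition on_abort (i j : 'I_n) (v : int) (s : lstate) : lstate * seq out :=
  if habort s j < v then
    let ha1 := updf (habort s) j v in
    let u := kth_largest f ha1 in
    let ha2 := if ha1 i < u then updf ha1 i u else ha1 in
    let o1 := if ha1 i < u then bcast (MAbort u) else [::] in
    let w := kth_largest (n - f).-1 ha2 in
    let s1 := set_habort s ha2 in
    if view s1 <= w then
      let r := enter_view s1 (w + 1) in (r.1, o1 ++ r.2)
    else (s1, o1)
  else (s, [::]).

Definition deliver (i j : 'I_n) (m : msg) (s : lstate) : lstate * seq out :=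
  match m with
  | MRequest v => (set_hreq s (updf (hreq s) j (Num.max (hreq s j) v)), [::])
  | MDone val =>
      (set_rdone s (fun k w => ((k == j) && (w == val)) || rdone s k w), [::])
  | MAbort v => on_abort i j v s
  | MSuggest k3 v3 k2 v2 pk2 v =>
      if (v == view s) && is_primary (view s) i && (sugg (pv s) j == None) then
        (set_pv s (pv_sugg (pv s) (updf (sugg (pv s)) j (Some (k3, v3, k2, v2, pk2)))), [::])
      else (s, [::])
  | MProof k1 v1 pk1 v =>
      if (v == view s) && (prf (pv s) j == None) then
        (set_pv s (pv_prf (pv s) (updf (prf (pv s)) j (Some (k1, v1, pk1)))), [::])
      else (s, [::])
  | MPropose key val v =>
      if (v == view s) && is_primary v j && (prop (pv s) == None) then
        (set_pv s (pv_prop (pv s)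
           (Some (key, val, lock (ks s), lock_val (ks s)))), [::])
      else (s, [::])
  | MVote st val v =>
      if v == view s then
        (set_pv s (pv_recv (pv s)
           (fun st' k w => (stage_eqb st' st && (k == j) && (w == val)) || recv (pv s) st' k w)),
         [::])
      else (s, [::])
  end.

Definition stage_act (st : stage) (val : V) (s : lstate) : lstate * seq out :=
  let v := view s in
  let k := ks s in
  let p := pv_fired (pv s) (fun st' w => (stage_eqb st' st && (w == val)) || fired (pv s) st' w) in
  match st with
  | SEcho =>
      let k' := if key1_val k != val then
                  Keys (lock k) (lock_val k) (key3 k) (key3_val k) (key2 k) (key2_val k)
                       (prev_key2 k) v val (key1 k)
                else
                  Keys (lock k) (lock_val k) (key3 k) (key3_val k) (key2 k) (key2_val k)
                       (prev_key2 k) v (key1_val k) (prev_key1 k) in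
      (set_ks (set_pv s (pv_addjoin p (MVote SKey1 val v))) k', [::])
  | SKey1 =>
      let k' := if key2_val k != val then
                  Keys (lock k) (lock_val k) (key3 k) (key3_val k) v val (key2 k)
                       (key1 k) (key1_val k) (prev_key1 k)
                else
                  Keys (lock k) (lock_val k) (key3 k) (key3_val k) v (key2_val k) (prev_key2 k)
                       (key1 k) (key1_val k) (prev_key1 k) in
      (set_ks (set_pv s (pv_addjoin p (MVote SKey2 val v))) k', [::])
  | SKey2 =>
      let k' := Keys (lock k) (lock_val k) v val (key2 k) (key2_val k) (prev_key2 k)
                     (key1 k) (key1_val k) (prev_key1 k) in
      (set_ks (set_pv s (pv_addjoin p (MVote SKey3 val v))) k', [::])
  | SKey3 =>
      let k' := Keys v val (key3 k) (key3_val k) (key2 k) (key2_val k) (prev_key2 k)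
                     (key1 k) (key1_val k) (prev_key1 k) in
      (set_ks (set_pv s (pv_addjoin p (MVote SLock val v))) k', [::])
  | SLock =>
      if ~~ done_sent s then (set_done_sent (set_pv s p) true, bcast (MDone val))
      else (set_pv s p, [::])
  end.

Definition key2proof_ok (s : lstate) (l : 'I_n) (k3 : int) (v3 : V) : bool :=
  match sugg (pv s) l with
  | Some (_, _, k2, v2, pk2) =>
      (pk2 < k2) && (k2 < view s) && ((k3 <= pk2) || ((k3 <= k2) && (v2 == v3)))
  | None => false
  end.

Definition suggestion (s : lstate) (j : 'I_n) : option (int * V) :=
  match sugg (pv s) j with
  | Some (k3, v3, _, _, _) =>
      if (k3 == 0) ||
         ((k3 < view s) && (f.+1 <= #|[set l : 'I_n | key2proof_ok s l k3 v3]|)%N)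
      then Some (k3, v3) else None
  | None => None
  end.

Definition proof_ok (s : lstate) (j : 'I_n) (L : int) (Lv : V) : bool :=
  match prf (pv s) j with
  | Some (k1, v1, pk1) => (pk1 < k1) && (k1 < view s) && supports k1 v1 pk1 L Lv
  | None => false
  end.

Inductive trig (i : 'I_n) : lstate -> lstate -> seq out -> Prop :=
| trig_stage st val s :
    (n - f <= #|[set j : 'I_n | recv (pv s) st j val]|)%N ->
    ~~ fired (pv s) st val ->
    trig i s (stage_act st val s).1 (stage_act st val s).2
| trig_echo s key val lk lv :
    prop (pv s) = Some (key, val, lk, lv) ->
    ~~ echoed (pv s) ->
    [|| lk == 0, val == lv |
        [&& key < view s, lk <= key &
            (f.+1 <= #|[set j : 'I_n | proof_ok s j lk lv]|)%N]] ->
    trig i s (set_pv s (pv_addjoin (pv_echoed (pv s) true) (MVote SEcho val (view s)))) [::]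
| trig_propose s k w :
    is_primary (view s) i ->
    ~~ proposed (pv s) ->
    (n - f <= #|[set j : 'I_n | suggestion s j != None]|)%N ->
    (exists j, suggestion s j = Some (k, w)) ->
    (forall j k' w', suggestion s j = Some (k', w') -> k' <= k) ->
    trig i s (set_pv s (pv_addjoin (pv_proposed (pv s) true) (MPropose k w (view s)))) [::]
| trig_done_echo s val :
    (f.+1 <= #|[set j : 'I_n | rdone s j val]|)%N ->
    ~~ done_sent s ->
    trig i s (set_done_sent s true) (bcast (MDone val))
| trig_decide s val :
    (n - f <= #|[set j : 'I_n | rdone s j val]|)%N ->
    decided s = None ->
    trig i s (set_decided s (Some val)) [::].

(* a local step of nonfaulty party i; [avail j m] : a message m from j may be
   received by i.  Triggered actions take priority over receptions/timeouts.
   Every step ends with [flush]. *)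
Inductive lstep (avail : 'I_n -> msg -> Prop) (i : 'I_n) : lstate -> lstate -> seq out -> Prop :=
| ls_trig s s1 o :
    trig i s s1 o ->
    lstep avail i s (flush s1).1 (o ++ (flush s1).2)
| ls_deliver s j m :
    (forall s1 o, ~ trig i s s1 o) ->
    avail j m ->
    lstep avail i s (flush (deliver i j m s).1).1
                    ((deliver i j m s).2 ++ (flush (deliver i j m s).1).2)
| ls_timeout s :
    (forall s1 o, ~ trig i s s1 o) ->
    lstep avail i s (flush s).1 (bcast (MAbort (view s)) ++ (flush s).2).

Definition init_keys (i : 'I_n) : keys :=
  Keys 0 (x i) 0 (x i) 0 (x i) (-1) 0 (x i) (-1).

Definition pre_state (i : 'I_n) : lstate :=
  LState (init_keys i) (fresh_pv [::]) 0 (fun _ => 0) (fun _ => 0) false None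
         (fun _ _ => false).

Definition init_local (i : 'I_n) : lstate * seq out :=
  let e := enter_view (pre_state i) 0 in
  let fl := flush e.1 in (fl.1, e.2 ++ fl.2).

Record gstate := GState {
  loc : 'I_n -> lstate;
  sent : 'I_n -> 'I_n -> msg -> Prop }.    (* sent a b m : a has sent m to b *)

Definition init_gstate : gstate :=
  GState (fun i => (init_local i).1) (fun a b m => out_in b m (init_local a).2).

(* reachable global states: nonfaulty, non-terminated parties take steps;
   a message from a nonfaulty party must have been sent to the receiver,
   Byzantine (faulty) parties may send anything at any time *)
Inductive reachable : gstate -> Prop :=
| reach_init : reachable init_gstate
| reach_step g i s' o :
    reachable g ->
    i \notin F ->
    decided (loc g i) = None ->
    lstep (fun j m => sent g j i m \/ j \in F) i (loc g i) s' o ->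
    reachable (GState (updf (loc g) i s')
                      (fun a b m => sent g a b m \/ (a = i /\ out_in b m o))).

End ITHS.

(* Main.v *)
Require Import Defs.
From mathcomp Require Import all_boot all_order all_algebra.
From mathcomp Require Import zify.
Import Order.TTheory GRing.Theory Num.Theory.
Set Implicit Arguments. Unset Strict Implicit.
Local Open Scope ring_scope.

Definition supp1 {V : eqType} (K : keys V) L Vv :=
  supports (key1 K) (key1_val K) (prev_key1 K) L Vv.
Definition supp2 {V : eqType} (K : keys V) L Vv :=
  supports (key2 K) (key2_val K) (prev_key2 K) L Vv.
Definition PP {V : eqType} (K : keys V) (val : V) (v : int) : bool :=
  (v <= key1 K) && ((key1_val K == val) || (v <= prev_key1 K)).
Definition kle {V : eqType} (K : keys V) (w : int) : bool :=
  [&& key1 K <= w, key2 K <= w, prev_key1 K <= key1 K & prev_key2 K <= key2 K].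

Definition echoK {V : eqType} (k : keys V) (v : int) (val : V) : keys V :=
  if key1_val k != val then
    Keys (Defs.lock k) (lock_val k) (key3 k) (key3_val k) (key2 k) (key2_val k)
         (prev_key2 k) v val (key1 k)
  else
    Keys (Defs.lock k) (lock_val k) (key3 k) (key3_val k) (key2 k) (key2_val k)
         (prev_key2 k) v (key1_val k) (prev_key1 k).

Definition key1K {V : eqType} (k : keys V) (v : int) (val : V) : keys V :=
  if key2_val k != val then
    Keys (Defs.lock k) (lock_val k) (key3 k) (key3_val k) v val (key2 k)
         (key1 k) (key1_val k) (prev_key1 k)
  else
    Keys (Defs.lock k) (lock_val k) (key3 k) (key3_val k) v (key2_val k) (prev_key2 k)
         (key1 k) (key1_val k) (prev_key1 k).

Lemma echoK_kle V (K : keys V) w val : kle K w -> kle (echoK K w val) w.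
Proof.
rewrite /kle /echoK; case: K => l lv k3 k3v k2 k2v pk2 k1 k1v pk1 /=.
by case: ifP => _ /= /and4P[a b c d]; apply/and4P; split => //; lia.
Qed.

Lemma echoK_supp1 V (K : keys V) w val L Vv :
  kle K w -> supp1 K L Vv -> supp1 (echoK K w val) L Vv.
Proof.
rewrite /kle /supp1 /echoK /supports; case: K => l lv k3 k3v k2 k2v pk2 k1 k1v pk1 /= /and4P[h h' h'' h'''].
case: (eqVneq k1v val) => [->|ne] /=.
  case/orP => [->//|/andP[a b]]; rewrite b andbT; apply/orP; right; lia.
case/orP => [a|/andP[a b]]; apply/orP; left; lia.
Qed.

Lemma echoK_PP V (K : keys V) w val val' v :
  kle K w -> PP K val' v -> PP (echoK K w val) val' v.
Proof.
rewrite /kle /PP /echoK; case: K => l lv k3 k3v k2 k2v pk2 k1 k1v pk1 /= /and4P[h h0 h' h''].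
case: (eqVneq k1v val) => [->|ne] /=.
  by case/andP=> a ->; rewrite andbT; lia.
case/andP=> a _; apply/andP; split; [lia|]; apply/orP; right; lia.
Qed.

Lemma echoK_PPnew V (K : keys V) w val : PP (echoK K w val) val w.
Proof.
rewrite /PP /echoK; case: K => l lv k3 k3v k2 k2v pk2 k1 k1v pk1 /=.
by case: (eqVneq k1v val) => [->|ne] /=; rewrite lexx eqxx.
Qed.

Lemma echoK_supp2 V (K : keys V) w val L Vv : supp2 (echoK K w val) L Vv = supp2 K L Vv.
Proof. by rewrite /supp2 /echoK; case: ifP. Qed.

Lemma key1K_kle V (K : keys V) w val : kle K w -> kle (key1K K w val) w.
Proof.
rewrite /kle /key1K; case: K => l lv k3 k3v k2 k2v pk2 k1 k1v pk1 /=.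
by case: ifP => _ /= /and4P[a b c d]; apply/and4P; split => //; lia.
Qed.

Lemma key1K_supp1 V (K : keys V) w val L Vv : supp1 (key1K K w val) L Vv = supp1 K L Vv.
Proof. by rewrite /supp1 /key1K; case: ifP. Qed.

Lemma key1K_PP V (K : keys V) w val val' v : PP (key1K K w val) val' v = PP K val' v.
Proof. by rewrite /PP /key1K; case: ifP. Qed.

Lemma key1K_supp2 V (K : keys V) w val L Vv :
  kle K w -> supp2 (key1K K w val) L Vv -> supp2 K L Vv \/ (L <= w /\ val != Vv).
Proof.
rewrite /kle /supp2 /key1K /supports; case: K => l lv k3 k3v k2 k2v pk2 k1 k1v pk1 /= /and4P[h0 h h' h''].
case: (eqVneq k2v val) => [->|ne] /=.
  case/orP => [->|/andP[a b]]; [by left|by right].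
case/orP => [a|/andP[a b]]; last by right.
case: (eqVneq k2v Vv) => [e|ne2].
  right; split; [lia|]; by rewrite -e eq_sym.
left; apply/orP; right; by rewrite a.
Qed.

Lemma In_rcons T (s : seq T) m y : List.In y (rcons s m) -> List.In y s \/ y = m.
Proof.
elim: s => [|a s IH] /=; first by case=> [->|[]]; right.
case=> [->|/IH [h|h]]; by [left; left | left; right | right].
Qed.

Lemma In_cat T (s1 s2 : seq T) y : List.In y (s1 ++ s2) -> List.In y s1 \/ List.In y s2.
Proof.
elim: s1 => [|a s IH] /=; first by right.
case=> [->|/IH [h|h]]; by [left; left | left; right | right].
Qed.

Lemma out_in_cat n V (b : 'I_n) (m : msg V) o1 o2 :
  out_in b m (o1 ++ o2) -> out_in b m o1 \/ out_in b m o2.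
Proof.
elim: o1 => [|a s IH] /=; first by right.
case=> [->|/IH [h|h]]; by [left; left | left; right | right].
Qed.

Lemma out_in_mapc n V (b : 'I_n) (m M : msg V) (s : seq 'I_n) :
  out_in b m [seq ((j, M) : out n V) | j <- s] -> m = M.
Proof. elim: s => [|a s IH] //= [[_ ->]|/IH] //. Qed.

Lemma out_in_bcast n V (b : 'I_n) (m M : msg V) : out_in b m (bcast n M) -> m = M.
Proof. exact: out_in_mapc. Qed.


Lemma stage_facts n (V : eqType) (st : stage) (val : V) (s : lstate n V) :
  let s1 := (stage_act st val s).1 in
  let w := view s in
  [/\ view s1 = w, recv (pv s1) = recv (pv s),
      kle (ks s) w -> kle (ks s1) w,
      forall L Vv, kle (ks s) w -> supp1 (ks s) L Vv -> supp1 (ks s1) L Vv &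
      [/\ forall val' v, kle (ks s) w -> PP (ks s) val' v -> PP (ks s1) val' v,
          forall L Vv, kle (ks s) w -> supp2 (ks s1) L Vv ->
            supp2 (ks s) L Vv \/ (st = SKey1 /\ L <= w /\ val != Vv),
          forall val' v, List.In (MVote SKey1 val' v) (join (pv s1)) ->
            List.In (MVote SKey1 val' v) (join (pv s)) \/ PP (ks s1) val' v &
          forall b val' v, ~ out_in b (MVote SKey1 val' v) (stage_act st val s).2]].
Proof.
case: st => /=.
- split => //.
  + exact: echoK_kle.
  + move=> *; exact: echoK_supp1.
  split.
  + move=> *; exact: echoK_PP.
  + by move=> L Vv _; rewrite echoK_supp2; left.
  + move=> val' v h; case: (In_rcons h) => [h1|[-> ->]]; [by left|right; exact: echoK_PPnew].
  + move=> b val' v; exact: id.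
- split => //.
  + exact: key1K_kle.
  + by move=> *; rewrite key1K_supp1.
  split.
  + by move=> *; rewrite key1K_PP.
  + move=> L Vv k /(key1K_supp2 k) [h|[h1 h2]]; [by left|by right].
  + by move=> val' v h; case: (In_rcons h) => [h1|//]; left.
  + by move=> b val' v.
- do 2!split => //; try (by intros; left); try (by move=> b val' v);
  by move=> val' v h; case: (In_rcons h) => [h1|//]; left.
- do 2!split => //; try (by intros; left); try (by move=> b val' v);
  by move=> val' v h; case: (In_rcons h) => [h1|//]; left.
- case: ifP => _; do 2!split => //; try (by intros; left); try (by move=> b val' v).
  by move=> b val' v /out_in_bcast.
Qed.

Lemma out_in_flatten n V (b : 'I_n) (m : msg V) (T : Type) (Fm : T -> seq (out n V)) s :
  out_in b m (flatten [seq Fm j | j <- s]) -> exists j, out_in b m (Fm j).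
Proof.
elim: s => [|a s IH] //= /out_in_cat [h|h]; first by exists a.
exact: IH.
Qed.

Lemma out_in_mapj n V (b j : 'I_n) (m : msg V) (l : seq (msg V)) :
  out_in b m [seq ((j, mm) : out n V) | mm <- l] -> List.In m l.
Proof. elim: l => [|a l IH] //= [[_ ->]|/IH]; by [left|right]. Qed.

Lemma out_in_suggest n V (b : 'I_n) (m : msg V) (Mf : 'I_n -> msg V) (l : seq 'I_n) :
  out_in b m [seq ((j, Mf j) : out n V) | j <- l] -> exists j, m = Mf j.
Proof. elim: l => [|a l IH] //= [[_ <-]|/IH //]; by exists a. Qed.

Lemma flush_facts n (V : eqType) (s : lstate n V) :
  let s1 := (flush s).1 in
  [/\ ks s1 = ks s, view s1 = view s, recv (pv s1) = recv (pv s),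
      join (pv s1) = join (pv s) &
      forall b val v, out_in b (MVote SKey1 val v) (flush s).2 ->
        List.In (MVote SKey1 val v) (join (pv s))].
Proof.
rewrite /flush; case: ifP => _ /=; split => // b val v.
  case/out_in_cat => [h|/out_in_suggest [j //]].
  case: (out_in_flatten h) => j; case: ifP => _ //; exact: out_in_mapj.
move=> h; case: (out_in_flatten h) => j; case: ifP => _ //; exact: out_in_mapj.
Qed.

Lemma stage_eqbP a b : stage_eqb a b -> a = b.
Proof. by case: a; case: b. Qed.

Lemma deliver_facts n f (V : eqType) (i j : 'I_n) (m : msg V) (s : lstate n V) :
  let s1 := (deliver f i j m s).1 in
  [/\ ks s1 = ks s, view s <= view s1,
      forall st k w, recv (pv s1) st k w ->
        (recv (pv s) st k w /\ view s1 = view s) \/ (k = j /\ m = MVote st w (view s1)),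
      forall val v, List.In (MVote SKey1 val v) (join (pv s1)) ->
        List.In (MVote SKey1 val v) (join (pv s)) &
      forall b val v, ~ out_in b (MVote SKey1 val v) (deliver f i j m s).2].
Proof.
case: m => [v|val|v|k3 v3 k2 v2 pk2 v|k1 v1 pk1 v|key val v|st val v] /=;
  try (case: ifP => hif); try (by split => //; try (by rewrite lexx); try (by intros; left); try (by intros)).
- rewrite /on_abort; case: ifP => _ /=; last by split => //; try (by rewrite lexx); try (by intros; left); try (by intros).
  case: ifP => hv /=.
  + split => //.
    * move: hv; set w := kth_largest _ _ => hv; lia.
    * by move=> ? ? [|[]].
    * move=> b val v' /out_in_cat [].
      - by case: ifP => _ //= /out_in_bcast.
      - by move/out_in_bcast.
  + split => //; try (by rewrite lexx); try (by intros; left).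
    move=> b val v'; case: ifP => _ //= /out_in_bcast //.
- move/eqP: hif => hv; split => //=; try (by rewrite lexx); try (by intros; left).
  move=> st' k w /orP [/andP [/andP [/stage_eqbP -> /eqP ->] /eqP ->]|h].
    by right; rewrite hv.
  by left.
by intros.
Qed.


Ltac simp_tr := split => //; split => //; try (by intros; left); try (by intros);
  try (by let hh := fresh in intros ? ? hh; case: (In_rcons hh) => [?|//]; left);
  try (by move=> b val' v /out_in_bcast).

Lemma trig_facts n f (V : eqType) (i : 'I_n) (s s1 : lstate n V) o :
  trig f i s s1 o ->
  let w := view s in
  [/\ view s1 = w, recv (pv s1) = recv (pv s),
      kle (ks s) w -> kle (ks s1) w,
      forall L Vv, kle (ks s) w -> supp1 (ks s) L Vv -> supp1 (ks s1) L Vv &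
      [/\ forall val' v, kle (ks s) w -> PP (ks s) val' v -> PP (ks s1) val' v,
          forall L Vv, kle (ks s) w -> supp2 (ks s1) L Vv ->
            supp2 (ks s) L Vv \/ (exists val, [/\ L <= w, val != Vv &
               (n - f <= #|[set k : 'I_n | recv (pv s) SKey1 k val]|)%N]),
          forall val' v, List.In (MVote SKey1 val' v) (join (pv s1)) ->
            List.In (MVote SKey1 val' v) (join (pv s)) \/ PP (ks s1) val' v &
          forall b val' v, ~ out_in b (MVote SKey1 val' v) o]].
Proof.
case.
- move=> st val sx hq _ /=.
  case: (stage_facts st val sx) => h1 h2 h3 h4 [h5 h6 h7 h8].
  split => //; split => //.
  move=> L Vv hk /(h6 L Vv hk) [h|[est [hL hv]]]; first by left.
  by right; exists val; split => //; rewrite -est.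
- move=> sx key val lk lv _ _ _ /=; simp_tr.
- move=> sy kk ww _ _ _ _ _ /=; simp_tr.
- move=> sz val _ _ /=; simp_tr.
- move=> sz val _ _ /=; simp_tr.
Qed.

Definition LocInv n (V : eqType) (s : lstate n V) :=
  kle (ks s) (view s) /\
  (forall val v, List.In (MVote SKey1 val v) (join (pv s)) -> PP (ks s) val v).

Lemma kle_mono V (K : keys V) w w' : kle K w -> w <= w' -> kle K w'.
Proof. rewrite /kle => /and4P [a b c d] h; apply/and4P; split => //; lia. Qed.

Lemma lstep_facts n f (V : eqType) avail (i : 'I_n) (s s' : lstate n V) o :
  lstep f avail i s s' o -> LocInv s ->
  [/\ LocInv s',
      forall L Vv, supp1 (ks s) L Vv -> supp1 (ks s') L Vv,
      forall val v, PP (ks s) val v -> PP (ks s') val v,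
      forall b val v, out_in b (MVote SKey1 val v) o -> PP (ks s') val v &
      [/\ view s <= view s',
          forall st k w, recv (pv s') st k w ->
            (recv (pv s) st k w /\ view s' = view s) \/ avail k (MVote st w (view s')) &
          forall L Vv, supp2 (ks s') L Vv -> supp2 (ks s) L Vv \/
            (exists val, [/\ L <= view s, val != Vv &
               (n - f <= #|[set k : 'I_n | recv (pv s) SKey1 k val]|)%N])]].
Proof.
case.
- move=> sx s1 ot ht [hk hj].
  case: (trig_facts ht) => t1 t2 t3 t4 [t5 t6 t7 t8].
  case: (flush_facts s1) => f1 f2 f3 f4 f5.
  have hj1 : forall val v, List.In (MVote SKey1 val v) (join (pv s1)) -> PP (ks s1) val v.
    by move=> val v /t7 [/hj /(t5 _ _ hk)|].
  split; rewrite /LocInv ?f1 ?f2 ?f3 ?f4.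
  + by split; [rewrite t1; exact: t3 hk|].
  + by move=> L Vv; apply: t4.
  + by move=> val v; apply: t5.
  + move=> b val v /out_in_cat [/t8 //|/f5]; exact: hj1.
  split; rewrite /LocInv ?f1 ?f2 ?f3 ?f4 ?t1 ?t2 //.
  + by move=> *; left.
  + by move=> L Vv /(t6 _ _ hk).
- move=> sx j m _ hav [hk hj].
  case: (deliver_facts f i j m sx) => d1 d2 d3 d4 d5.
  set s1 := (deliver f i j m sx).1 in d1 d2 d3 d4 *.
  case: (flush_facts s1) => f1 f2 f3 f4 f5.
  have hj1 : forall val v, List.In (MVote SKey1 val v) (join (pv s1)) -> PP (ks s1) val v.
    by move=> val v /d4 /hj; rewrite d1.
  split; rewrite /LocInv ?f1 ?f2 ?f3 ?f4 ?d1 //.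
  + split; last by rewrite -d1.
    rewrite -d1; apply: kle_mono d2; by rewrite d1.
  + move=> b val v /out_in_cat [/d5 //|/f5]; rewrite -d1; exact: hj1.
  split => //; last by move=> *; left.
  move=> st k w /d3 [h|[e1 e2]]; [by left|by right; rewrite e1 -e2].
- move=> sx _ [hk hj].
  case: (flush_facts sx) => f1 f2 f3 f4 f5.
  split; rewrite /LocInv ?f1 ?f2 ?f3 ?f4 //.
  + move=> b val v /out_in_cat [/out_in_bcast //|/f5]; exact: hj.
  split; rewrite /LocInv ?f1 ?f2 ?f3 ?f4 //; try by move=> *; left.
Qed.

Lemma PP_supp1 V (K : keys V) val v L Vv : PP K val v -> L <= v -> val != Vv -> supp1 K L Vv.
Proof.
rewrite /PP /supp1 /supports => /andP [a /orP [/eqP e|b]] hL hv.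
  by rewrite e hv andbT; apply/orP; right; lia.
by apply/orP; left; lia.
Qed.

Lemma pick_sub n (B : {set 'I_n}) k : (k <= #|B|)%N ->
  exists S : {set 'I_n}, S \subset B /\ #|S| = k.
Proof.
move=> hk; exists [set x in take k (enum B)]; split.
  by apply/subsetP => x; rewrite inE => /mem_take; rewrite mem_enum.
rewrite cardsE; move/card_uniqP: (take_uniq k (enum_uniq (mem B))) => ->.
by rewrite size_take -cardE; case: ltnP => // h; apply/eqP; rewrite eqn_leq hk h.
Qed.

Definition Inv n f (V : eqType) (F : {set 'I_n}) (g : gstate n V) :=
  [/\ forall a, a \notin F -> LocInv (loc g a),
      forall a b val v, a \notin F -> sent g a b (MVote SKey1 val v) -> PP (ks (loc g a)) val v,
      forall a k st w, a \notin F -> k \notin F -> recv (pv (loc g a)) st k w ->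
        sent g k a (MVote st w (view (loc g a))) &
      forall a L Vv, a \notin F -> 0 < L -> supp2 (ks (loc g a)) L Vv ->
        exists S : {set 'I_n}, [/\ #|S| = f.+1, [disjoint S & F] &
          forall k, k \in S -> supp1 (ks (loc g k)) L Vv]].

Lemma Inv_init n f (V : eqType) (x : 'I_n -> V) F : Inv f F (init_gstate x).
Proof.
have H : forall a, let e := enter_view (pre_state x a) 0 in
   [/\ ks (init_local x a).1 = init_keys x a, view (init_local x a).1 = 0,
       recv (pv (init_local x a).1) = (fun _ _ _ => false),
       join (pv (init_local x a).1) = [:: MProof (key1 (init_keys x a)) (key1_val (init_keys x a)) (prev_key1 (init_keys x a)) 0] &
       forall b val v, out_in b (MVote SKey1 val v) (init_local x a).2 ->
        List.In (MVote SKey1 val v) (join (pv e.1))].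
  move=> a e; rewrite /init_local -/e.
  case: (flush_facts e.1) => f1 f2 f3 f4 f5 /=; split => //.
  by move=> b val v /out_in_cat [/out_in_bcast //|/f5].
split => /=.
- move=> a _; case: (H a) => h1 h2 h3 h4 h5; split.
    by rewrite h1 h2 /kle /=.
  by rewrite h4 => val v [|[]].
- move=> a b val v _; case: (H a) => h1 h2 h3 h4 h5 /h5 /= [|[]] //.
- move=> a k st w _ _; case: (H a) => h1 h2 h3 h4 h5; by rewrite h3.
- move=> a L Vv _ hL; case: (H a) => h1 h2 h3 h4 h5; rewrite h1 /supp2 /supports /=.
  case/orP => [h|/andP [h _]]; exfalso; lia.
Qed.

Lemma Inv_step n f (V : eqType) (F : {set 'I_n}) (g : gstate n V) i s' o :
  (3 * f < n)%N -> (#|F| <= f)%N ->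
  Inv f F g -> i \notin F ->
  lstep f (fun j m => sent g j i m \/ j \in F) i (loc g i) s' o ->
  Inv f F (GState (updf (loc g) i s')
                  (fun a b m => sent g a b m \/ (a = i /\ out_in b m o))).
Proof.
move=> h3 hF [I1 I2 I3 I4] hi hst.
case: (lstep_facts hst (I1 i hi)) => l1 l2 l3 l4 [l5 l6 l7].
have Hs1 : forall k L Vv, supp1 (ks (loc g k)) L Vv ->
    supp1 (ks (updf (loc g) i s' k)) L Vv.
  by move=> k L Vv; rewrite /updf; case: eqP => [->|]; [exact: l2|].
have HPP : forall k val v, PP (ks (loc g k)) val v ->
    PP (ks (updf (loc g) i s' k)) val v.
  by move=> k val v; rewrite /updf; case: eqP => [->|]; [exact: l3|].
have Hold : forall a L Vv, a \notin F -> 0 < L -> supp2 (ks (loc g a)) L Vv ->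
    exists S : {set 'I_n}, [/\ #|S| = f.+1, [disjoint S & F] &
      forall k, k \in S -> supp1 (ks (updf (loc g) i s' k)) L Vv].
  move=> a L Vv ha hL /(I4 a L Vv ha hL) [S [c1 c2 c3]].
  by exists S; split => // k /c3 /Hs1.
split => /=.
- move=> a ha; rewrite /updf; case: eqP => [_//|_]; exact: I1.
- move=> a b val v ha [h|[ea ho]]; first exact/HPP/(I2 _ _ _ _ ha h).
  by subst a; rewrite /updf eqxx; exact: l4 ho.
- move=> a k st w ha hk; rewrite /updf; case: eqP => [->|_]; last first.
    by move=> h; left; exact: I3.
  move/l6 => [[h ->]|[h|h]]; first by left; exact: I3.
    by left.
  by rewrite h in hk.
- move=> a L Vv ha hL; rewrite /updf; case: eqP => [ea|_]; last exact: Hold.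
  subst a; move/l7 => [h|[val [hLv hv hq]]]; first exact: (Hold i L Vv hi hL h).
  set A := [set k : 'I_n | recv (pv (loc g i)) SKey1 k val] in hq.
  have hB : (f.+1 <= #|A :\: F|)%N.
    rewrite cardsD.
    have : (#|A :&: F| <= #|F|)%N by apply: subset_leq_card; apply: subsetIr.
    lia.
  case: (pick_sub hB) => S [sS cS].
  exists S; split => //.
    rewrite disjoints_subset; apply/subsetP => k /(subsetP sS); rewrite !inE => /andP [hk _].
    exact: hk.
  move=> k /(subsetP sS); rewrite !inE => /andP [hkF hkA].
  have := I3 i k SKey1 val hi hkF hkA.
  move/(I2 _ _ _ _ hkF) /HPP => hp.
  exact: PP_supp1 hp hLv hv.
Qed.

Lemma Inv_reach n f (V : eqType) (x : 'I_n -> V) (F : {set 'I_n}) (g : gstate n V) :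
  (3 * f < n)%N -> (#|F| <= f)%N -> reachable f x F g -> Inv f F g.
Proof.
move=> h3 hF; elim => [|g0 i s' o _ IH hi _ hst]; first exact: Inv_init.
exact: Inv_step.
Qed.

Theorem lemma2p10 (n f : nat) (V : eqType) (x : 'I_n -> V) (F : {set 'I_n})
    (g : gstate n V) :
  (3 * f < n)%N ->
  (#|F| <= f)%N ->
  reachable f x F g ->
  forall i j : 'I_n, i \notin F -> j \notin F ->
  let Ki := ks (loc g i) in
  let Kj := ks (loc g j) in
  0 < Defs.lock Ki ->
  (Defs.lock Ki <= prev_key2 Kj) || ((Defs.lock Ki <= key2 Kj) && (key2_val Kj != lock_val Ki)) ->
  exists S : {set 'I_n},
    #|S| = f.+1 /\ [disjoint S & F] /\
    (forall k, k \in S ->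
       supports (key1 (ks (loc g k))) (key1_val (ks (loc g k))) (prev_key1 (ks (loc g k)))
                (Defs.lock Ki) (lock_val Ki)).
Proof.
move=> h3 hF hr i j hi hj Ki Kj hL hs.
case: (Inv_reach h3 hF hr) => _ _ _ I4.
case: (I4 j (Defs.lock Ki) (lock_val Ki) hj hL hs) => S [c1 c2 c3].
by exists S.
Qed.
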